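(* Let $n\ge3$, let $G_2=\overline{L(K_{2,n})}$, and let $G_1$ be a finite bipartite graph with bipartition $(X,Y)$ ($X,Y$ nonempty) such that some vertex is adjacent to all of $X$ and some vertex is adjacent to all of $Y$, and with $\Delta(G_1)\ge n$. If the two-squares graph does not embed in $G_1$, then $G_1$ and $G_2$ are $\mathcal{C}$-$\mathrm{HH}$-symmetric.
   Context: $\Delta$ denotes maximum degree. ''Embeds'' means is isomorphic to an induced subgraph. The two-squares graph is the $6$-cycle $v_1\dots v_6v_1$ with the single chord $v_3v_6$. $\overline{L(K_{2,n})}$ is the bipartite graph with parts $\{x_1,\dots,x_n\}$, $\{y_1,\dots,y_n\}$ and $x_i\sim y_j$ iff $i\ne j$. A homomorphism maps edges to edges. $G_1$ is $\mathcal{C}$-$\mathrm{HH}$-morphic to $G_2$ if every homomorphism from a finite connected induced subgraph $A$ of $G_1$ onto an induced subgraph $B$ of $G_2$ extends to a homomorphism $G_1\to G_2$; $G_1,G_2$ are $\mathcal{C}$-$\mathrm{HH}$-symmetric if each is $\mathcal{C}$-$\mathrm{HH}$-morphic to the other. *)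

(* Defs.v *)
From mathcomp Require Import all_boot.
Set Implicit Arguments. Unset Strict Implicit. Unset Printing Implicit Defensive.

Definition simple_graph (V : finType) (e : rel V) : Prop :=
  symmetric e /\ irreflexive e.

Definition induced_rel (V : finType) (e : rel V) (A : {set V}) : rel V :=
  [rel u v | [&& u \in A, v \in A & e u v]].

Definition connected_on (V : finType) (e : rel V) (A : {set V}) : Prop :=
  A != set0 /\ {in A &, forall x y, connect (induced_rel e A) x y}.

Definition hom_on (V1 V2 : finType) (e1 : rel V1) (e2 : rel V2)
  (A : {set V1}) (h : V1 -> V2) : Prop :=
  {in A &, forall x y, e1 x y -> e2 (h x) (h y)}.

Definition hom (V1 V2 : finType) (e1 : rel V1) (e2 : rel V2) (g : V1 -> V2) :
  Prop := forall x y, e1 x y -> e2 (g x) (g y).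

Definition C_HH_morphic (V1 V2 : finType) (e1 : rel V1) (e2 : rel V2) : Prop :=
  forall (A : {set V1}) (B : {set V2}) (h : V1 -> V2),
    connected_on e1 A -> hom_on e1 e2 A h -> h @: A = B ->
    exists g : V1 -> V2, hom e1 e2 g /\ {in A, forall x, g x = h x}.

Definition C_HH_symmetric (V1 V2 : finType) (e1 : rel V1) (e2 : rel V2) : Prop :=
  C_HH_morphic e1 e2 /\ C_HH_morphic e2 e1.

Definition bipartition (V : finType) (e : rel V) (X Y : {set V}) : Prop :=
  [/\ X != set0, Y != set0, [disjoint X & Y], X :|: Y = setT &
      forall x y, e x y -> (x \in X) && (y \in Y) || (x \in Y) && (y \in X)].

Definition degree (V : finType) (e : rel V) (v : V) : nat := #|[set w | e v w]|.

Definition max_degree_ge (V : finType) (e : rel V) (n : nat) : Prop :=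
  exists v, n <= degree e v.

(* two-squares graph: 6-cycle v1..v6 (indices 0..5) plus chord v3v6 (2--5) *)
Definition two_squares_rel : rel 'I_6 :=
  fun i j => let a := nat_of_ord i in let b := nat_of_ord j in
    [|| (b == (a + 1) %% 6), (a == (b + 1) %% 6), (a == 2) && (b == 5)
      | (a == 5) && (b == 2)].

Definition embeds (W V : finType) (f0 : rel W) (e : rel V) : Prop :=
  exists f : W -> V, injective f /\ forall i j, e (f i) (f j) = f0 i j.

(* complement of L(K_{2,n}): x_i = (false,i), y_j = (true,j), x_i ~ y_j iff i<>j *)
Definition coLK2n_rel (n : nat) : rel (bool * 'I_n) :=
  fun u v => (u.1 != v.1) && (u.2 != v.2).

(* Main.v *)
Require Import Defs.
From mathcomp Require Import all_boot.
Set Implicit Arguments. Unset Strict Implicit. Unset Printing Implicit Defensive.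

Lemma side_other (V : finType) (e : rel V) (P Q : {set V}) :
  [disjoint P & Q] ->
  (forall x y, e x y -> (x \in P) && (y \in Q) || (x \in Q) && (y \in P)) ->
  forall a b, e a b -> a \in Q -> b \in P.
Proof.
move=> D H a b /H /orP[/andP[aP _]|/andP[_ //]] aQ.
by rewrite (disjointFr D aP) in aQ.
Qed.

Lemma side_same (V : finType) (e : rel V) (P Q : {set V}) :
  [disjoint P & Q] ->
  (forall x y, e x y -> (x \in P) && (y \in Q) || (x \in Q) && (y \in P)) ->
  forall a b, a \in P -> b \in P -> e a b = false.
Proof.
move=> D H a b aP bP; apply/negP => /H.
by rewrite (disjointFr D aP) (disjointFr D bP) !andbF.
Qed.

Lemma ts_rows : forall i j : 'I_6,
  (forall k, two_squares_rel i k = two_squares_rel j k) -> i = j.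
Proof.
move=> [a Ha] [b Hb] Hk; apply: val_inj => /=.
have K := fun k (H : k < 6) => Hk (Ordinal H).
clear Hk; move: Ha Hb K; rewrite /two_squares_rel /=.
case: a => [|[|[|[|[|[|a]]]]]] //; case: b => [|[|[|[|[|[|b]]]]]] // _ _ K;
 first [ by [] | by move: (K 0 isT)
       | by move: (K 1 isT) | by move: (K 2 isT) | by move: (K 3 isT)
       | by move: (K 4 isT) | by move: (K 5 isT) ].
Qed.

Lemma chain (V : finType) (e : rel V) (P Q : {set V}) (p q : V) :
  symmetric e -> irreflexive e -> [disjoint P & Q] ->
  (forall x y, e x y -> (x \in P) && (y \in Q) || (x \in Q) && (y \in P)) ->
  p \in P -> q \in Q -> {in Q, forall y, e p y} -> {in P, forall x, e q x} ->
  ~ embeds two_squares_rel e ->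
  forall q1 q2, q1 \in Q -> q2 \in Q ->
  [set x | e q1 x] \subset [set x | e q2 x] \/
  [set x | e q2 x] \subset [set x | e q1 x].
Proof.
move=> Sy Ir D H pP qQ Up Uq NE q1 q2 Q1 Q2.
case: (boolP ([set x | e q1 x] \subset [set x | e q2 x])) => [|/subsetPn [x1]];
  first by left.
rewrite !inE => E11 E21; right; apply/subsetP => x2; rewrite !inE => E22.
apply/negPn/negP => E12.
have D' : [disjoint Q & P] by rewrite disjoint_sym.
have H' : forall x y, e x y -> (x \in Q) && (y \in P) || (x \in P) && (y \in Q).
  by move=> x y /H; rewrite orbC.
have x1P : x1 \in P by apply: (side_other D H E11).
have x2P : x2 \in P by apply: (side_other D H E22).
have SP := side_same D H. have SQ := side_same D' H'.
have F1 : e x1 p = false by apply: SP.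
have F2 : e x1 x2 = false by apply: SP.
have F3 : e p x1 = false by apply: SP.
have F4 : e p x2 = false by apply: SP.
have F5 : e x2 x1 = false by apply: SP.
have F6 : e x2 p = false by apply: SP.
have F7 : e q1 q2 = false by apply: SQ.
have F8 : e q1 q = false by apply: SQ.
have F9 : e q2 q1 = false by apply: SQ.
have F10 : e q2 q = false by apply: SQ.
have F11 : e q q1 = false by apply: SQ.
have F12 : e q q2 = false by apply: SQ.
have F13 : e x1 q1 by by rewrite Sy.
have F14 : e q1 x1 by rewrite Sy F13.
have F15 : e q1 p by by rewrite Sy Up.
have F16 : e p q1 by rewrite Sy F15.
have F17 : e p q2 by apply: Up.
have F18 : e q2 p by rewrite Sy F17.
have F19 : e q2 x2 by [].
have F20 : e x2 q2 by rewrite Sy F19.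
have F21 : e x2 q by by rewrite Sy Uq.
have F22 : e q x2 by rewrite Sy F21.
have F23 : e q x1 by apply: Uq.
have F24 : e x1 q by rewrite Sy F23.
have F25 : e p q by apply: Up.
have F26 : e q p by rewrite Sy F25.
have F27 : e x1 q2 = false by rewrite Sy; apply: negbTE.
have F28 : e q2 x1 = false by apply: negbTE.
have F29 : e q1 x2 = false by apply: negbTE.
have F30 : e x2 q1 = false by rewrite Sy; apply: negbTE.
pose f (i : 'I_6) := match val i with
  0 => x1 | 1 => q1 | 2 => p | 3 => q2 | 4 => x2 | _ => q end.
have Hf : forall i j, e (f i) (f j) = two_squares_rel i j.
  move=> [a Ha] [b Hb]; rewrite /f /two_squares_rel /=.
  move: Ha Hb; case: a => [|[|[|[|[|[|a]]]]]] //; case: b => [|[|[|[|[|[|b]]]]]] // _ _ /=;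
  rewrite ?Ir ?F1 ?F2 ?F3 ?F4 ?F5 ?F6 ?F7 ?F8 ?F9 ?F10 ?F11 ?F12 ?F13 ?F14 ?F15 ?F16 ?F17 ?F18 ?F19 ?F20 ?F21 ?F22 ?F23 ?F24 ?F25 ?F26 ?F27 ?F28 ?F29 ?F30 //.
apply: NE; exists f; split=> // i j Eij; apply: ts_rows => k.
by rewrite -!Hf Eij.
Qed.

Lemma star (V : finType) (e : rel V) (P Q A : {set V}) (q0 : V) :
  symmetric e -> [disjoint P & Q] ->
  (forall x y, e x y -> (x \in P) && (y \in Q) || (x \in Q) && (y \in P)) ->
  (forall q1 q2, q1 \in Q -> q2 \in Q ->
    [set x | e q1 x] \subset [set x | e q2 x] \/
    [set x | e q2 x] \subset [set x | e q1 x]) ->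
  (forall x, x \in A -> exists2 y, y \in A & e x y) ->
  q0 \in A :&: Q ->
  exists2 qs, qs \in A :&: Q & {in A :&: P, forall x, e qs x}.
Proof.
move=> Sy D H Ch Hn q0AQ.
have D' : [disjoint Q & P] by rewrite disjoint_sym.
have H' : forall x y, e x y -> (x \in Q) && (y \in P) || (x \in P) && (y \in Q).
  by move=> x y /H; rewrite orbC.
case: (@arg_maxnP _ q0 [pred y | y \in A :&: Q] (fun y => #|[set x | e y x]|) q0AQ).
move=> qs qsAQ Hmax; exists qs => // x; rewrite inE => /andP[xA xP].
have [y yA exy] := Hn x xA.
have yQ : y \in Q by apply: (side_other D' H' exy).
have qsQ : qs \in Q by move: qsAQ; rewrite /= inE => /andP[].
have yAQ : y \in A :&: Q by rewrite inE yA.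
have xNy : x \in [set x | e y x] by rewrite inE Sy.
case: (Ch y qs yQ qsQ) => [/subsetP/(_ x xNy)|Hs]; first by rewrite inE.
have Hc : #|[set x | e y x]| <= #|[set x | e qs x]| := Hmax y yAQ.
have /eqP Eq : [set x | e qs x] == [set x | e y x] by rewrite eqEcard Hs Hc.
by move: xNy; rewrite -Eq inE.
Qed.

Lemma has_nbr (V : finType) (e : rel V) (A : {set V}) (a b : V) :
  connected_on e A -> a \in A -> b \in A -> a != b ->
  forall x, x \in A -> exists2 y, y \in A & e x y.
Proof.
move=> [_ Ac] aA bA ab x xA.
pose z := if x == a then b else a.
have zA : z \in A by rewrite /z; case: ifP.
have xz : x != z by rewrite /z; case: ifP => [/eqP->//|/negbT].
case/connectP: (Ac x z xA zA) => [[|y p]] /=; first by move=> _ E; rewrite E eqxx in xz.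
by case/andP => /and3P[_ yA exy] _ _; exists y.
Qed.

Lemma coLK_sym n : symmetric (@coLK2n_rel n).
Proof. by move=> u v; rewrite /coLK2n_rel eq_sym (eq_sym u.2). Qed.

Lemma sides (V : finType) (e : rel V) (X Y : {set V}) :
  bipartition e X Y -> forall x y, e x y -> (x \in X) = ~~ (y \in X).
Proof.
move=> [_ _ D _ H]; have D' : [disjoint Y & X] by rewrite disjoint_sym.
move=> x y /H /orP[/andP[xX yY]|/andP[xY yX]].
  by rewrite xX (disjointFr D' yY).
by rewrite yX (disjointFr D' xY).
Qed.

Lemma dir2 (n : nat) (V : finType) (e : rel V) (X Y : {set V}) :
  simple_graph e -> bipartition e X Y ->
  (exists v, {in X, forall x, e v x}) ->
  (exists v, {in Y, forall y, e v y}) ->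
  C_HH_morphic (@coLK2n_rel n) e.
Proof.
move=> [Sy Ir] Bp [v Uv] [w Uw].
have Sd := sides Bp.
case: Bp => XnE YnE D XYT H.
have vnX : v \in X = false.
  case/set0Pn: XnE => x0 x0X; have := Sd _ _ (Uv x0 x0X); rewrite x0X.
  by case: (v \in X).
have wX : w \in X.
  case/set0Pn: YnE => y0 y0Y; have := Sd _ _ (Uw y0 y0Y).
  have D' : [disjoint Y & X] by rewrite disjoint_sym.
  by rewrite (disjointFr D' y0Y).
have inY : forall u, u \in X = false -> u \in Y.
  move=> u uX; have : u \in X :|: Y by rewrite XYT inE.
  by rewrite inE uX.
move=> A B h [AnE Ac] hh _.
case/set0Pn: AnE => a0 a0A.
pose Q (u : bool * 'I_n) := (u.1 == a0.1) == (h a0 \in X).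
have R : forall u, u \in A -> (h u \in X) = Q u.
  have cl : closed (induced_rel (@coLK2n_rel n) A) [pred u | (h u \in X) == Q u].
    move=> x y /and3P[xA yA exy]; rewrite !inE /=.
    have E1 := Sd _ _ (hh x y xA yA exy).
    move: exy; rewrite /coLK2n_rel /Q E1 => /andP[d1 _].
    move: d1; case: (h y \in X); case: x.1; case: y.1; case: a0.1;
      by case: (h a0 \in X).
  move=> u uA; have := closed_connect cl (Ac a0 u a0A uA).
  rewrite !inE /Q eqxx /=; case: (h a0 \in X) => /=.
    by rewrite eqxx => /esym/eqP.
  by rewrite eqxx => /esym/eqP.
pose g u := if u \in A then h u else if Q u then w else v.
have gX : forall u, (g u \in X) = Q u.
  by move=> u; rewrite /g; case: ifP => [/R//|_]; case: ifP.
have claim : forall u u', u \notin A -> @coLK2n_rel n u u' -> e (g u) (g u').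
  move=> u u' uA /andP[d _].
  have Qu : Q u = ~~ Q u'.
    by rewrite /Q; move: d; case: u.1; case: u'.1; case: a0.1; case: (h a0 \in X).
  rewrite /g (negbTE uA) -/(g u'); case: ifP => Qu1.
    by apply: Uw; apply: inY; rewrite gX -[Q u']negbK -Qu Qu1.
  by apply: Uv; rewrite gX -[Q u']negbK -Qu Qu1.
exists g; split; last by move=> x xA; rewrite /g xA.
move=> x y exy.
case: (boolP (x \in A)) => xA; last exact: claim.
case: (boolP (y \in A)) => yA; last by rewrite Sy; apply: claim; rewrite // coLK_sym.
by rewrite /g xA yA; apply: hh.
Qed.

Lemma dir1 (n : nat) (V : finType) (e : rel V) (X Y : {set V}) :
  3 <= n -> simple_graph e -> bipartition e X Y ->
  (exists v, {in X, forall x, e v x}) ->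
  (exists v, {in Y, forall y, e v y}) ->
  ~ embeds two_squares_rel e ->
  C_HH_morphic e (@coLK2n_rel n).
Proof.
move=> n3 [Sy Ir] Bp [v Uv] [w Uw] NE.
have Sd := sides Bp.
case: Bp => XnE YnE D XYT H.
have D' : [disjoint Y & X] by rewrite disjoint_sym.
have H' : forall x y, e x y -> (x \in Y) && (y \in X) || (x \in X) && (y \in Y).
  by move=> x y /H; rewrite orbC.
have vY : v \in Y.
  by case/set0Pn: XnE => x0 x0X; apply: (side_other D' H' _ x0X); rewrite Sy Uv.
have wX : w \in X.
  by case/set0Pn: YnE => y0 y0Y; apply: (side_other D H _ y0Y); rewrite Sy Uw.
have ChY := chain Sy Ir D H wX vY Uw Uv NE.
have ChX := chain Sy Ir D' H' vY wX Uv Uw NE.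
move=> A B h Acon hh _.
case: (Acon) => AnE Ac.
case/set0Pn: AnE => a aA.
case: (set_0Vmem (A :\ a)) => [Ea | [b]].
  have Aa : forall x, x \in A -> x = a.
    move=> x xA; apply/eqP; apply/negP => /negP xa.
    have : x \in A :\ a by rewrite in_setD1 xa xA.
    by rewrite Ea inE.
  have [t Ht] : exists t, @coLK2n_rel n (h a) t.
    have l0 : 0 < n by apply: leq_trans n3.
    have l1 : 1 < n by apply: leq_trans n3.
    case E: (nat_of_ord (h a).2 == 0).
      exists (~~ (h a).1, Ordinal l1); rewrite /coLK2n_rel /=.
      apply/andP; split; first by case: ((h a).1).
      by apply/eqP => /(f_equal val) /=; move/eqP: E => ->.
    exists (~~ (h a).1, Ordinal l0); rewrite /coLK2n_rel /=.
    apply/andP; split; first by case: ((h a).1).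
    by apply/eqP => /(f_equal val) /= E'; rewrite E' eqxx in E.
  pose g u := if (u \in X) == (a \in X) then h a else t.
  exists g; split; last by move=> x /Aa ->; rewrite /g eqxx.
  move=> x y exy; have := Sd _ _ exy; rewrite /g => ->.
  by case: (y \in X); case: (a \in X) => //=; rewrite coLK_sym.
rewrite in_setD1 => /andP[ba bA].
have Hn := has_nbr Acon aA bA (ltac:(by rewrite eq_sym)).
have [y1 ya eay] := Hn a aA.
have [x0 x0AX [y0 y0AY]] : exists2 x0, x0 \in A :&: X & exists y0, y0 \in A :&: Y.
  case/orP: (H _ _ eay) => /andP[p1 p2].
    by exists a; rewrite ?inE ?aA //; exists y1; rewrite inE ya.
  by exists y1; rewrite ?inE ?ya //; exists a; rewrite inE aA.
have [ys ysAY Hys] := star Sy D H ChY Hn y0AY.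
have [xs xsAX Hxs] := star Sy D' H' ChX Hn x0AX.
move: (xsAX) (ysAY); rewrite !inE => /andP[xsA xsX] /andP[ysA ysY].
pose g u := if u \in A then h u else if u \in X then h xs else h ys.
have claim : forall x y, x \in X -> y \in Y -> e x y -> @coLK2n_rel n (g x) (g y).
  move=> x y xX yY exy; have yX : y \in X = false := disjointFr D' yY.
  rewrite /g yX xX; case: (boolP (x \in A)) => xA; case: (boolP (y \in A)) => yA.
  - exact: hh.
  - by apply: hh => //; rewrite Sy; apply: Hys; rewrite inE xA.
  - by apply: hh => //; apply: Hxs; rewrite inE yA.
  - by apply: hh => //; apply: Hxs; rewrite inE ysA.
exists g; split; last by move=> x xA; rewrite /g xA.
move=> x y exy; case/orP: (H _ _ exy) => /andP[p1 p2]; first exact: claim.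
by rewrite coLK_sym; apply: claim => //; rewrite Sy.
Qed.

Theorem corollary6p7 (n : nat) (V : finType) (e : rel V) (X Y : {set V}) :
  3 <= n ->
  simple_graph e ->
  bipartition e X Y ->
  (exists v, {in X, forall x, e v x}) ->
  (exists v, {in Y, forall y, e v y}) ->
  max_degree_ge e n ->
  ~ embeds two_squares_rel e ->
  C_HH_symmetric e (@coLK2n_rel n).
Proof.
move=> n3 Sg Bp Hv Hw _ NE; split.
  exact: (dir1 n3 Sg Bp Hv Hw NE).
exact: (dir2 Sg Bp Hv Hw).
Qed.
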